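(* Assume the following about $\phi^{\mathrm{AI}}(K;0)=h^{\mathrm{AI}}(K;0)/K$: it is continuous on $(0,\infty)$; $\phi^{\mathrm{AI}}(K;0)<\lambda$ for all sufficiently small $K>0$; there is $\hat K>0$ with $\phi^{\mathrm{AI}}(\hat K;0)>\lambda$; and $\phi^{\mathrm{AI}}(K;0)<\lambda$ for all sufficiently large $K$ (these hold under the hypotheses $C(0)>\beta\Delta+u$, existence of such $\hat K$, $\lim_{K\to\infty}w^{\mathrm{AI}}(\underline\alpha,K;\pi)=\infty$, and continuity of $\phi^{\mathrm{AI}}(\cdot;0)$). Let $K_U^{\mathrm{AI}}>0$ be the smallest positive $K$ with $\phi^{\mathrm{AI}}(K;0)=\lambda$ (the unstable threshold steady state). Suppose $a_H^{\mathrm{AI}}(K)$ is continuous on $(0,\infty)$, strictly positive for all $K>0$, and that $a_H^{\mathrm{AI}}(K)/K$ is bounded below by a positive constant for all sufficiently small $K>0$. Then: (i) for every $\eta>0$, $\phi^{\mathrm{AI}}(K;\eta)>\phi^{\mathrm{AI}}(K;0)$ for all $K>0$; (ii) the number $$\bar\eta=\sup_{K\in(0,K_U^{\mathrm{AI}}]}\frac{[\lambda-\phi^{\mathrm{AI}}(K;0)]_+}{\Delta(1-\pi)\,a_H^{\mathrm{AI}}(K)/K}$$ satisfies $\bar\eta>0$ and, for all $\eta>\bar\eta$, $\phi^{\mathrm{AI}}(K;\eta)>\lambda$ for all $K\in(0,K_U^{\mathrm{AI}}]$ (the low-archive basin is eliminated); in particular if $\bar\eta\le1$ this is achieved by some $\eta\in[0,1]$,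 while if $\bar\eta>1$ then even $\eta=1$ does not achieve it; (iii) $\bar\eta$ is weakly decreasing under pointwise increases of $a_H^{\mathrm{AI}}(K)/K$ on $(0,K_U^{\mathrm{AI}}]$.
   Context: Model: archive stock $K\ge0$ depreciating at rate $\lambda\in(0,1)$; routine-task share $\pi\in(0,1)$; knowledge increment $\Delta>0$; parameters $\beta,u\ge0$; cost shifter $C(K)$; outside option $w^{\mathrm{AI}}(\alpha,K;\pi)$ with lowest ability $\underline\alpha$. In the AI environment, for each $K$ the period equilibrium gives a posted flow of knowledge-enhancing queries $q_H^{\mathrm{AI}}(K)\ge0$, resolution probability $\sigma^{\mathrm{AI}}(K)\in[0,1]$, and private-resolution probability of knowledge-enhancing queries $a_H^{\mathrm{AI}}(K)\in[0,1]$. With conversion rate $\eta\in[0,1]$ (probability that a privately resolved knowledge-enhancing query is publicly logged), knowledge creation is $h^{\mathrm{AI}}(K;\eta)=\Delta(1-\pi)[q_H^{\mathrm{AI}}(K)\sigma^{\mathrm{AI}}(K)+\eta a_H^{\mathrm{AI}}(K)]$ and average creation is $\phi^{\mathrm{AI}}(K;\eta)=h^{\mathrm{AI}}(K;\eta)/K$, so $\phi^{\mathrm{AI}}(K;\eta)=\phi^{\mathrm{AI}}(K;0)+\Delta(1-\pi)\eta\,a_H^{\mathrm{AI}}(K)/K$. $[x]_+=\max\{x,0\}$. *)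

(* Defs.v *)
From Stdlib Require Import Reals.
From Coquelicot Require Import Coquelicot.
Open Scope R_scope.

Definition phiAI (Delta pi : R) (qH sig aH : R -> R) (eta K : R) : R :=
  Delta * (1 - pi) * (qH K * sig K + eta * aH K) / K.

Definition posp (x : R) : R := Rmax x 0.

Definition etaratio (lam Delta pi : R) (qH sig aH : R -> R) (K : R) : R :=
  posp (lam - phiAI Delta pi qH sig aH 0 K) / (Delta * (1 - pi) * aH K / K).

Definition etabar (lam Delta pi : R) (qH sig aH : R -> R) (KU : R) : Rbar :=
  Lub_Rbar (fun y => exists K, 0 < K <= KU /\ y = etaratio lam Delta pi qH sig aH K).

(* Main.v *)
Require Import Defs.
From Stdlib Require Import Reals.
From Coquelicot Require Import Coquelicot.
From Stdlib Require Import Lra.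
Open Scope R_scope.


Lemma phi_split D p q s a eta K :
  phiAI D p q s a eta K = phiAI D p q s a 0 K + eta * (D*(1-p)*a K / K).
Proof. unfold phiAI, Rdiv; ring. Qed.

Lemma phi0_indep D p q s a a' K :
  phiAI D p q s a 0 K = phiAI D p q s a' 0 K.
Proof. unfold phiAI, Rdiv; ring. Qed.

Lemma lub_le (E E' : R -> Prop) :
  (forall y', E' y' -> exists y, E y /\ y' <= y) ->
  Rbar_le (Lub_Rbar E') (Lub_Rbar E).
Proof.
  intros H. destruct (Lub_Rbar_correct E') as [_ H2]. apply H2.
  intros y' Hy'. destruct (H y' Hy') as [y [Hy Hle]].
  destruct (Lub_Rbar_correct E) as [H1 _].
  apply Rbar_le_trans with (Finite y). simpl; exact Hle. apply H1; exact Hy.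
Qed.

Theorem proposition4
  (lam pi Delta : R) (qH sig aH : R -> R) (KU : R)
  (Hlam : 0 < lam < 1) (Hpi : 0 < pi < 1) (HDelta : 0 < Delta)
  (HqH : forall K, 0 < K -> 0 <= qH K)
  (Hsig : forall K, 0 < K -> 0 <= sig K <= 1)
  (HaH01 : forall K, 0 < K -> 0 <= aH K <= 1)
  (* assumptions on phi^AI(.;0) *)
  (Hcont : forall K, 0 < K -> continuous (phiAI Delta pi qH sig aH 0) K)
  (Hsmall : exists eps, 0 < eps /\
              forall K, 0 < K < eps -> phiAI Delta pi qH sig aH 0 K < lam)
  (Hhat : exists Khat, 0 < Khat /\ lam < phiAI Delta pi qH sig aH 0 Khat)
  (Hlarge : exists M, forall K, M < K -> phiAI Delta pi qH sig aH 0 K < lam)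
  (* KU is the smallest positive K with phi^AI(K;0) = lam *)
  (HKUpos : 0 < KU)
  (HKU : phiAI Delta pi qH sig aH 0 KU = lam)
  (HKUmin : forall K, 0 < K < KU -> phiAI Delta pi qH sig aH 0 K <> lam)
  (* assumptions on aH *)
  (HaHcont : forall K, 0 < K -> continuous aH K)
  (HaHpos : forall K, 0 < K -> 0 < aH K)
  (HaHlow : exists c eps, 0 < c /\ 0 < eps /\
              forall K, 0 < K < eps -> c <= aH K / K) :
  (* (i) *)
  (forall eta, 0 < eta -> forall K, 0 < K ->
     phiAI Delta pi qH sig aH 0 K < phiAI Delta pi qH sig aH eta K)
  /\
  (* (ii) *)
  (exists eb : R,
     etabar lam Delta pi qH sig aH KU = Finite eb /\
     0 < eb /\
     (forall eta, eb < eta -> forall K, 0 < K <= KU ->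
        lam < phiAI Delta pi qH sig aH eta K) /\
     (eb < 1 -> exists eta, 0 <= eta <= 1 /\
        forall K, 0 < K <= KU -> lam < phiAI Delta pi qH sig aH eta K) /\
     (1 < eb -> ~ (forall K, 0 < K <= KU -> lam < phiAI Delta pi qH sig aH 1 K)))
  /\
  (* (iii) *)
  (forall aH' : R -> R,
     (forall K, 0 < K <= KU -> aH K / K <= aH' K / K) ->
     Rbar_le (etabar lam Delta pi qH sig aH' KU) (etabar lam Delta pi qH sig aH KU)).
Proof.
  set (g := fun K => Delta * (1 - pi) * aH K / K).
  assert (HDp : 0 < Delta * (1 - pi)) by (apply Rmult_lt_0_compat; lra).
  assert (Hg : forall K, 0 < K -> 0 < g K).
  { intros K HK. unfold g, Rdiv. apply Rmult_lt_0_compat.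
    apply Rmult_lt_0_compat; auto. apply Rinv_0_lt_compat; auto. }
  assert (Hphi0 : forall K, 0 < K -> 0 <= phiAI Delta pi qH sig aH 0 K).
  { intros K HK. unfold phiAI, Rdiv. apply Rmult_le_pos.
    apply Rmult_le_pos. lra.
    rewrite Rmult_0_l, Rplus_0_r. apply Rmult_le_pos. apply HqH; auto. apply Hsig; auto.
    left; apply Rinv_0_lt_compat; auto. }
  assert (Hsplit : forall eta K, phiAI Delta pi qH sig aH eta K =
            phiAI Delta pi qH sig aH 0 K + eta * g K).
  { intros; unfold g; apply phi_split. }
  split.
  { intros eta Heta K HK. rewrite (Hsplit eta K).
    assert (0 < eta * g K) by (apply Rmult_lt_0_compat; auto; apply Hg; auto). lra. }
  set (E := fun y => exists K, 0 < K <= KU /\ y = etaratio lam Delta pi qH sig aH K).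
  assert (Hrat : forall K, 0 < K -> etaratio lam Delta pi qH sig aH K =
            posp (lam - phiAI Delta pi qH sig aH 0 K) / g K) by reflexivity.
  destruct HaHlow as [c [eps [Hc [Heps Hlow]]]].
  set (a0 := Rmin (eps/2) KU).
  assert (Ha0 : 0 < a0 <= KU).
  { unfold a0; split. apply Rmin_glb_lt; lra. apply Rmin_r. }
  assert (Ha0e : a0 < eps).
  { unfold a0. apply Rle_lt_trans with (eps/2). apply Rmin_l. lra. }
  destruct (continuity_ab_min (fun K => aH K / K) a0 KU (proj2 Ha0)) as [Km [HKm1 HKm2]].
  { intros K HK.
    assert (HKp : 0 < K) by lra.
    change (continuity_pt (aH / id)%F K).
    apply continuity_pt_div.
    apply continuity_pt_filterlim. apply HaHcont; auto.
    apply continuity_pt_id. unfold id; lra. }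
  set (m := Rmin c (aH Km / Km)).
  assert (Hm : 0 < m).
  { unfold m. apply Rmin_glb_lt; auto. unfold Rdiv. apply Rmult_lt_0_compat.
    apply HaHpos; lra. apply Rinv_0_lt_compat; lra. }
  assert (Hlowb : forall K, 0 < K <= KU -> m <= aH K / K).
  { intros K HK. destruct (Rlt_or_le K a0) as [H|H].
    - apply Rle_trans with c. apply Rmin_l. apply Hlow; lra.
    - apply Rle_trans with (aH Km / Km). apply Rmin_r. apply HKm1; lra. }
  assert (Hgl : forall K, 0 < K <= KU -> Delta * (1 - pi) * m <= g K).
  { intros K HK. unfold g. replace (Delta * (1 - pi) * aH K / K) with
      (Delta * (1 - pi) * (aH K / K)) by (unfold Rdiv; ring).
    apply Rmult_le_compat_l. lra. apply Hlowb; auto. }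
  set (B := lam / (Delta * (1 - pi) * m)).
  assert (HB : forall K, 0 < K <= KU -> etaratio lam Delta pi qH sig aH K <= B).
  { intros K HK. rewrite Hrat by lra.
    assert (HgK : 0 < g K) by (apply Hg; lra).
    assert (Hp : 0 <= posp (lam - phiAI Delta pi qH sig aH 0 K) <= lam).
    { unfold posp. pose proof (Hphi0 K (proj1 HK)). split. apply Rmax_r.
      apply Rmax_lub; lra. }
    unfold B. apply Rle_trans with (lam / g K).
    - unfold Rdiv. apply Rmult_le_compat_r. left; apply Rinv_0_lt_compat; auto. lra.
    - unfold Rdiv. apply Rmult_le_compat_l. lra.
      apply Rinv_le_contravar. apply Rmult_lt_0_compat; auto. apply Hgl; auto. }
  destruct Hsmall as [e1 [He1 Hs]].
  set (K1 := Rmin e1 KU / 2).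
  assert (HK1 : 0 < K1 <= KU /\ K1 < e1).
  { unfold K1. pose proof (Rmin_l e1 KU). pose proof (Rmin_r e1 KU).
    assert (0 < Rmin e1 KU) by (apply Rmin_glb_lt; lra). lra. }
  set (r1 := etaratio lam Delta pi qH sig aH K1).
  assert (Hr1 : 0 < r1).
  { unfold r1. rewrite Hrat by lra. unfold Rdiv. apply Rmult_lt_0_compat.
    unfold posp. apply Rlt_le_trans with (lam - phiAI Delta pi qH sig aH 0 K1).
    pose proof (Hs K1 ltac:(lra)). lra. apply Rmax_l.
    apply Rinv_0_lt_compat. apply Hg; lra. }
  assert (Hlubc := Lub_Rbar_correct E).
  assert (HE1 : E r1) by (exists K1; split; [lra| reflexivity]).
  assert (Hle1 : Rbar_le r1 (Lub_Rbar E)) by (apply (proj1 Hlubc); auto).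
  assert (HleB : Rbar_le (Lub_Rbar E) B).
  { apply (proj2 Hlubc). intros y [K [HK ->]]. simpl. apply HB; auto. }
  destruct (Lub_Rbar E) as [eb| |] eqn:Heb; simpl in Hle1, HleB; try contradiction.
  split.
  - exists eb. split. unfold etabar. fold E. exact Heb.
    assert (Hub : forall K, 0 < K <= KU -> etaratio lam Delta pi qH sig aH K <= eb).
    { intros K HK. pose proof (proj1 Hlubc (etaratio lam Delta pi qH sig aH K)) as H.
      apply H. exists K; split; auto. }
    assert (Hkey : forall eta, eb < eta -> forall K, 0 < K <= KU ->
        lam < phiAI Delta pi qH sig aH eta K).
    { intros eta Heta K HK. rewrite Hsplit.
      pose proof (Hub K HK) as H. rewrite Hrat in H by lra.
      assert (HgK : 0 < g K) by (apply Hg; lra).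
      assert (H2 : posp (lam - phiAI Delta pi qH sig aH 0 K) <= eb * g K).
      { apply Rmult_le_reg_r with (/ g K). apply Rinv_0_lt_compat; auto.
        rewrite Rmult_assoc, Rinv_r by lra. rewrite Rmult_1_r. exact H. }
      assert (H3 : lam - phiAI Delta pi qH sig aH 0 K <= posp (lam - phiAI Delta pi qH sig aH 0 K))
        by apply Rmax_l.
      assert (H4 : eb * g K < eta * g K) by (apply Rmult_lt_compat_r; auto).
      lra. }
    split. lra. split. exact Hkey. split.
    + intros H1. exists 1. split. lra. apply Hkey. exact H1.
    + intros H1 Hall.
      assert (HbB : Rbar_le (Finite eb) (Finite 1)).
      { apply (proj2 Hlubc). intros y [K [HK ->]]. simpl.
        rewrite Hrat by lra.
        assert (HgK : 0 < g K) by (apply Hg; lra).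
        pose proof (Hall K HK) as H. rewrite Hsplit, Rmult_1_l in H.
        apply Rmult_le_reg_r with (g K); auto.
        unfold Rdiv. rewrite Rmult_assoc, Rinv_l by lra. rewrite Rmult_1_r, Rmult_1_l.
        unfold posp. apply Rmax_lub; lra. }
      simpl in HbB. lra.
  - intros aH' Haa. unfold etabar. apply lub_le.
    intros y' [K [HK ->]]. exists (etaratio lam Delta pi qH sig aH K). split.
    exists K; split; auto.
    unfold etaratio. rewrite (phi0_indep Delta pi qH sig aH' aH K).
    assert (HgK : 0 < g K) by (apply Hg; lra).
    assert (Hgg : g K <= Delta * (1 - pi) * aH' K / K).
    { unfold g. replace (Delta * (1 - pi) * aH K / K) with (Delta * (1 - pi) * (aH K / K)) by (unfold Rdiv; ring).
      replace (Delta * (1 - pi) * aH' K / K) with (Delta * (1 - pi) * (aH' K / K)) by (unfold Rdiv; ring).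
      apply Rmult_le_compat_l. lra. apply Haa; auto. }
    fold (g K). unfold Rdiv. apply Rmult_le_compat_l.
    unfold posp. apply Rmax_r.
    apply Rinv_le_contravar; auto.
Qed.
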